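(* Let $G$ be a (not necessarily connected) graph on $n\ge1$ vertices with adjacency matrix $A$, let $m\ge1$, and let $\alpha\in\mathbb{R}\setminus(\mathrm{ev}(A)\cup\{0,-m,-2m\})$. Then there exist $\mu\in\mathbb{R}$, $f\in\mathbb{R}^m$, $g\in\mathbb{R}^n$ with \[ (J_m+\alpha I)f=\tfrac{\mu}{2}\mathbf 1,\quad (A-J_n-\alpha I)g=-\tfrac{\mu}{2}\mathbf 1,\quad \langle f,f\rangle+\langle g,g\rangle=1,\quad \langle\mathbf 1,f\rangle+\langle\mathbf 1,g\rangle=0 \] if and only if \[ (\alpha+2m)\langle\mathbf 1,(A-\alpha I)^{-1}\mathbf 1\rangle-m=0. \]
   Context: $\mathrm{ev}(A)$ is the set of eigenvalues of $A$; $J_k$ the $k\times k$ all-ones matrix; $\mathbf 1$ the all-ones vector of the appropriate size; $I$ the identity. *)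

(* Defs.v *)
From HB Require Import structures.
From mathcomp Require Import all_boot all_order all_algebra.
Set Implicit Arguments. Unset Strict Implicit. Unset Printing Implicit Defensive.
Import Order.TTheory GRing.Theory Num.Theory.
Local Open Scope ring_scope.

Definition adjmx (R : nzRingType) (n : nat) (e : rel 'I_n) : 'M[R]_n :=
  \matrix_(i, j) (e i j)%:R.

Definition Jmx (R : nzRingType) (k : nat) : 'M[R]_k := const_mx 1.
Definition ones (R : nzRingType) (k : nat) : 'cV[R]_k := const_mx 1.

Definition dotv (R : nzRingType) (k : nat) (u v : 'cV[R]_k) : R :=
  \sum_(i < k) u i 0 * v i 0.

(* Main.v *)
Require Import Defs.
From HB Require Import structures.
From mathcomp Require Import all_boot all_order all_algebra.
From mathcomp Require Import ring lra.
Import Order.TTheory GRing.Theory Num.Theory.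
Local Open Scope ring_scope.

Section H.
Variable R : rcfType.

Lemma J_mul k (v : 'cV[R]_k) : Jmx R k *m v = dotv (ones R k) v *: ones R k.
Proof.
apply/matrixP => i j; rewrite (ord1 j) !mxE /dotv mulr1; apply: eq_bigr => l _.
by rewrite !mxE mul1r.
Qed.

Lemma dotvZr k (u v : 'cV[R]_k) a : dotv u (a *: v) = a * dotv u v.
Proof. rewrite /dotv mulr_sumr; apply: eq_bigr => i _; rewrite mxE; ring. Qed.

Lemma dotvZl k (u v : 'cV[R]_k) a : dotv (a *: u) v = a * dotv u v.
Proof. rewrite /dotv mulr_sumr; apply: eq_bigr => i _; rewrite mxE; ring. Qed.

Lemma dotv11 k : dotv (ones R k) (ones R k) = k%:R.
Proof.
rewrite /dotv (eq_bigr (fun _ => 1)) ?sumr_const ?card_ord //.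
by move=> i _; rewrite !mxE mulr1.
Qed.

Lemma dotv_ge0 k (u : 'cV[R]_k) : 0 <= dotv u u.
Proof. by apply: sumr_ge0 => i _; rewrite -expr2 sqr_ge0. Qed.

Lemma dotv0 k : dotv (0 : 'cV[R]_k) 0 = 0.
Proof. by rewrite /dotv big1 // => i _; rewrite mxE mul0r. Qed.

End H.

Theorem lemma3p4 (R : rcfType) (n m : nat) (e : rel 'I_n)
  (e_sym : symmetric e) (e_irr : irreflexive e)
  (hn : (1 <= n)%N) (hm : (1 <= m)%N) (alpha : R)
  (h_ev : ~~ eigenvalue (adjmx R e) alpha)
  (h0 : alpha != 0) (hm1 : alpha != - m%:R) (hm2 : alpha != - (2 * m)%:R) :
  (exists (mu : R) (f : 'cV[R]_m) (g : 'cV[R]_n),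
      [/\ (Jmx R m + alpha%:M) *m f = (mu / 2) *: ones R m,
          (adjmx R e - Jmx R n - alpha%:M) *m g = - (mu / 2) *: ones R n,
          dotv f f + dotv g g = 1
        & dotv (ones R m) f + dotv (ones R n) g = 0])
  <->
  (alpha + 2 * m%:R) * dotv (ones R n) (invmx (adjmx R e - alpha%:M) *m ones R n)
    - m%:R = 0.
Proof.
set B := adjmx R e - alpha%:M.
have Bu : B \in unitmx.
  by move: h_ev; rewrite /eigenvalue /eigenspace kermx_eq0 row_free_unit negbK.
set s := dotv (ones R n) (invmx B *m ones R n).
have am : alpha + m%:R != 0 by rewrite addr_eq0.
have eqB : forall g : 'cV[R]_n, (adjmx R e - Jmx R n - alpha%:M) *m g
    = B *m g - dotv (ones R n) g *: ones R n.
  move=> g; rewrite /B !mulmxBl J_mul; by rewrite addrAC.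
split=> [[mu [f [g [e1 e2 e3 e4]]]]|hs].
-
  set F := dotv (ones R m) f in e1 e4; set G := dotv (ones R n) g in e2 e4.
  rewrite mulmxDl J_mul mul_scalar_mx -/F in e1.
  have ef : f = ((mu / 2 - F) / alpha) *: ones R m.
    have h : alpha *: f = (mu / 2 - F) *: ones R m.
      by rewrite scalerBl -e1 addrC addKr.
    by rewrite mulrC -scalerA -h scalerA mulVf // scale1r.
  rewrite eqB in e2.
  have eg : g = (G - mu / 2) *: (invmx B *m ones R n).
    rewrite scalemxAr -{1}(mulKmx Bu g); congr (_ *m _).
    move/eqP: e2; rewrite subr_eq => /eqP ->.
    by rewrite scalerBl scaleNr addrC.
  have P1 : F * alpha - (mu / 2 - F) * m%:R = 0.
    have := congr1 (dotv (ones R m)) ef; rewrite dotvZr dotv11 -/F => hF.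
    by rewrite {1}hF; field.
  have P2 : G - (G - mu/2) * s = 0.
    have := congr1 (dotv (ones R n)) eg; rewrite dotvZr -/s -/G => hG.
    by rewrite {1}hG subrr.
  have eF : F = - G by apply/eqP; rewrite -subr_eq0 opprK e4.
  rewrite eF in P1.
  have E : mu * ((alpha + 2 * m%:R) * s - m%:R) = 0.
    have -> : mu * ((alpha + 2 * m%:R) * s - m%:R) =
      2*(1-s)*(- G * alpha - (mu / 2 - - G) * m%:R) + 2*(alpha+m%:R)*(G - (G - mu/2) * s) by field.
    by rewrite P1 P2 !mulr0 addr0.
  have [mu0|mun0] := eqVneq mu 0; last first.
    by move/eqP: E; rewrite mulf_eq0 (negPf mun0) => /eqP.
  exfalso.
  rewrite mu0 in P1.
  have G0 : G = 0.
    apply/eqP; move/eqP: P1; apply: contraLR => Gn0.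
    have -> : - G * alpha - (0 / 2 - - G) * m%:R = - (G * (alpha + m%:R)) by ring.
    by rewrite oppr_eq0 mulf_neq0.
  rewrite eF G0 mu0 oppr0 mul0r subrr mul0r scale0r in ef.
  rewrite G0 mu0 mul0r subrr scale0r in eg.
  by move: e3; rewrite ef eg !dotv0 addr0 => /eqP; rewrite eq_sym oner_eq0.
-
  set c := (alpha + m%:R)^-1 / 2.
  set G1 := - (m%:R * c).
  set f1 : 'cV[R]_m := c *: ones R m.
  set g1 : 'cV[R]_n := (G1 - 1/2) *: (invmx B *m ones R n).
  have hG1 : dotv (ones R n) g1 = G1.
    rewrite dotvZr -/s /G1 /c.
    have -> : s = m%:R / (alpha + 2 * m%:R).
      have a2 : alpha + 2 * m%:R != 0.
        by rewrite addr_eq0 -natrM.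
      apply: (mulfI a2); rewrite mulrCA mulfV // mulr1.
      by apply/eqP; rewrite -subr_eq0 hs.
    by field; rewrite am /= addr_eq0 -natrM.
  set N := dotv f1 f1 + dotv g1 g1.
  have Npos : 0 < N.
    apply: ltr_wpDr; first exact: dotv_ge0.
    rewrite /f1 dotvZl dotvZr dotv11 mulrA mulr_gt0 ?ltr0n // -expr2 exprn_even_gt0 //.
    by rewrite /c mulf_neq0 ?invr_eq0 // pnatr_eq0.
  set t := (Num.sqrt N)^-1.
  have tt : t * t * N = 1.
    have sN : Num.sqrt N ^+ 2 = N by rewrite sqr_sqrtr // ltW.
    have sn0 : Num.sqrt N != 0 by rewrite sqrtr_eq0 -ltNge.
    by rewrite -{1}sN /t; field.
  exists t, (t *: f1), (t *: g1); split.
  + rewrite -scalemxAr mulmxDl J_mul mul_scalar_mx /f1 dotvZr dotv11 scalerA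
      -scalerDl scalerA; congr (_ *: _); rewrite /c; field; exact: am.
  + rewrite eqB dotvZr hG1 -scalemxAr /g1 -(scalemxAr (G1 - 1/2)) (mulKVmx Bu).
    by rewrite !scalerA -scalerBl; congr (_ *: _); field.
  + by rewrite -[RHS]tt /N !dotvZl !dotvZr; ring.
  + by rewrite (dotvZr _ _ _ g1) hG1 (dotvZr _ _ _ f1) /f1 dotvZr dotv11 /G1 /c; field.
Qed.
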